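(* Let $\mathcal{C}$ be a peircean bicategory and define $a;^\bullet b:=\neg(\neg a;\neg b)$. Then for all arrows $c:X\to Y$, $d:Y\to Z$, $e:Z\to W$: (1) $c;(d;^\bullet e)\le(c;d);^\bullet e$; and (2) $(c;^\bullet d);e\le c;^\bullet(d;e)$.
   Context: Composition $;$ in diagrammatic order. A cartesian bicategory is a poset-enriched symmetric monoidal category with, for each $X$, commutative comonoid $(\mathrm{copy}_X,\mathrm{disc}_X)$ and monoid $(\mathrm{cocopy}_X,\mathrm{codisc}_X)$ forming special Frobenius bimonoids, comonoid left adjoint to monoid, every arrow $c$ satisfying $c;\mathrm{copy}\le\mathrm{copy};(c\otimes c)$ and $c;\mathrm{disc}\le\mathrm{disc}$, with standard coherence. A map is an arrow $f$ with $f;\mathrm{copy}=\mathrm{copy};(f\otimes f)$ and $f;\mathrm{disc}=\mathrm{disc}$. A peircean bicategory is a cartesian bicategory whose homsets carry Boolean algebras (with the given order) such that $f;\neg c=\neg(f;c)$ for every map $f:X\to Y$ and arrow $c:Y\to Z$. *)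

(* Defs.v *)
(* Poset-enriched symmetric monoidal categories, cartesian
   bicategories and peircean bicategories, axiomatised directly.
   Composition [f >> g] is in diagrammatic order (f first). *)




Class SMCData (Ob : Type) (Hom : Ob -> Ob -> Type) := {
  hle : forall {X Y : Ob}, Hom X Y -> Hom X Y -> Prop;
  comp : forall {X Y Z : Ob}, Hom X Y -> Hom Y Z -> Hom X Z;
  idm : forall X : Ob, Hom X X;
  otens : Ob -> Ob -> Ob;
  htens : forall {X Y X' Y' : Ob}, Hom X Y -> Hom X' Y' -> Hom (otens X X') (otens Y Y');
  ounit : Ob;
  assoc : forall X Y Z : Ob, Hom (otens (otens X Y) Z) (otens X (otens Y Z));
  assocI : forall X Y Z : Ob, Hom (otens X (otens Y Z)) (otens (otens X Y) Z);
  lunit : forall X : Ob, Hom (otens ounit X) X;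
  lunitI : forall X : Ob, Hom X (otens ounit X);
  runit : forall X : Ob, Hom (otens X ounit) X;
  runitI : forall X : Ob, Hom X (otens X ounit);
  sym : forall X Y : Ob, Hom (otens X Y) (otens Y X)
}.

Notation "f ⊑ g" := (hle f g) (at level 70, no associativity).
Notation "f >> g" := (comp f g) (at level 40, left associativity).
Notation "f ** g" := (htens f g) (at level 33, left associativity).
Notation "X ⊗ Y" := (otens X Y) (at level 32, left associativity).

Class SMCLaws (Ob : Type) (Hom : Ob -> Ob -> Type) {S : SMCData Ob Hom} : Prop := {
  hle_refl : forall X Y (f : Hom X Y), f ⊑ f;
  hle_trans : forall X Y (f g h : Hom X Y), f ⊑ g -> g ⊑ h -> f ⊑ h;
  hle_antisym : forall X Y (f g : Hom X Y), f ⊑ g -> g ⊑ f -> f = g;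
  comp_mono : forall X Y Z (f f' : Hom X Y) (g g' : Hom Y Z),
      f ⊑ f' -> g ⊑ g' -> f >> g ⊑ f' >> g';
  htens_mono : forall X Y X' Y' (f f' : Hom X Y) (g g' : Hom X' Y'),
      f ⊑ f' -> g ⊑ g' -> f ** g ⊑ f' ** g';
  comp_assoc : forall X Y Z W (f : Hom X Y) (g : Hom Y Z) (h : Hom Z W),
      f >> g >> h = f >> (g >> h);
  comp_idl : forall X Y (f : Hom X Y), idm X >> f = f;
  comp_idr : forall X Y (f : Hom X Y), f >> idm Y = f;
  htens_id : forall X Y, idm X ** idm Y = idm (X ⊗ Y);
  htens_comp : forall X Y Z X' Y' Z' (f : Hom X Y) (g : Hom Y Z) (f' : Hom X' Y') (g' : Hom Y' Z'),
      (f >> g) ** (f' >> g') = (f ** f') >> (g ** g');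
  assoc_iso1 : forall X Y Z, assoc X Y Z >> assocI X Y Z = idm _;
  assoc_iso2 : forall X Y Z, assocI X Y Z >> assoc X Y Z = idm _;
  lunit_iso1 : forall X, lunit X >> lunitI X = idm _;
  lunit_iso2 : forall X, lunitI X >> lunit X = idm _;
  runit_iso1 : forall X, runit X >> runitI X = idm _;
  runit_iso2 : forall X, runitI X >> runit X = idm _;
  sym_inv : forall X Y, sym X Y >> sym Y X = idm _;
  assoc_nat : forall X Y Z X' Y' Z' (f : Hom X X') (g : Hom Y Y') (h : Hom Z Z'),
      f ** g ** h >> assoc X' Y' Z' = assoc X Y Z >> f ** (g ** h);
  lunit_nat : forall X Y (f : Hom X Y), idm ounit ** f >> lunit Y = lunit X >> f;
  runit_nat : forall X Y (f : Hom X Y), f ** idm ounit >> runit Y = runit X >> f;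
  sym_nat : forall X Y X' Y' (f : Hom X X') (g : Hom Y Y'),
      f ** g >> sym X' Y' = sym X Y >> g ** f;
  pentagon : forall W X Y Z,
      assoc (W ⊗ X) Y Z >> assoc W X (Y ⊗ Z)
      = assoc W X Y ** idm Z >> assoc W (X ⊗ Y) Z >> idm W ** assoc X Y Z;
  triangle : forall X Y, assoc X ounit Y >> idm X ** lunit Y = runit X ** idm Y;
  hexagon : forall X Y Z,
      assoc X Y Z >> sym X (Y ⊗ Z) >> assoc Y Z X
      = sym X Y ** idm Z >> assoc Y X Z >> idm Y ** sym X Z
}.

Definition exch {Ob Hom} {S : SMCData Ob Hom} (A B C D : Ob)
  : Hom ((A ⊗ B) ⊗ (C ⊗ D)) ((A ⊗ C) ⊗ (B ⊗ D)) :=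
  assoc A B (C ⊗ D) >> idm A ** assocI B C D >> idm A ** (sym B C ** idm D)
  >> idm A ** assoc C B D >> assocI A C (B ⊗ D).

Class CBData (Ob : Type) (Hom : Ob -> Ob -> Type) {S : SMCData Ob Hom} := {
  copy : forall X : Ob, Hom X (X ⊗ X);
  disc : forall X : Ob, Hom X ounit;
  cocopy : forall X : Ob, Hom (X ⊗ X) X;
  codisc : forall X : Ob, Hom ounit X
}.

Class CBLaws (Ob : Type) (Hom : Ob -> Ob -> Type)
  {S : SMCData Ob Hom} {B : CBData Ob Hom} : Prop := {
  cb_smc : SMCLaws Ob Hom;
  copy_counitl : forall X, copy X >> disc X ** idm X >> lunit X = idm X;
  copy_counitr : forall X, copy X >> idm X ** disc X >> runit X = idm X;
  copy_coassoc : forall X, copy X >> copy X ** idm X >> assoc X X X = copy X >> idm X ** copy X;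
  copy_cocomm : forall X, copy X >> sym X X = copy X;
  cocopy_unitl : forall X, lunitI X >> codisc X ** idm X >> cocopy X = idm X;
  cocopy_unitr : forall X, runitI X >> idm X ** codisc X >> cocopy X = idm X;
  cocopy_assoc : forall X, cocopy X ** idm X >> cocopy X = assoc X X X >> idm X ** cocopy X >> cocopy X;
  cocopy_comm : forall X, sym X X >> cocopy X = cocopy X;
  frob_l : forall X, copy X ** idm X >> assoc X X X >> idm X ** cocopy X = cocopy X >> copy X;
  frob_r : forall X, idm X ** copy X >> assocI X X X >> cocopy X ** idm X = cocopy X >> copy X;
  special : forall X, copy X >> cocopy X = idm X;
  adj_copy_unit : forall X, idm X ⊑ copy X >> cocopy X;
  adj_copy_counit : forall X, cocopy X >> copy X ⊑ idm (X ⊗ X);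
  adj_disc_unit : forall X, idm X ⊑ disc X >> codisc X;
  adj_disc_counit : forall X, codisc X >> disc X ⊑ idm ounit;
  lax_copy : forall X Y (c : Hom X Y), c >> copy Y ⊑ copy X >> c ** c;
  lax_disc : forall X Y (c : Hom X Y), c >> disc Y ⊑ disc X;
  copy_tens : forall X Y, copy (X ⊗ Y) = copy X ** copy Y >> exch X X Y Y;
  disc_tens : forall X Y, disc (X ⊗ Y) = disc X ** disc Y >> lunit ounit;
  copy_unit : copy ounit = lunitI ounit;
  disc_unit : disc ounit = idm ounit;
  cocopy_tens : forall X Y, cocopy (X ⊗ Y) = exch X Y X Y >> cocopy X ** cocopy Y;
  codisc_tens : forall X Y, codisc (X ⊗ Y) = lunitI ounit >> codisc X ** codisc Y;
  cocopy_unit : cocopy ounit = lunit ounit;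
  codisc_unit : codisc ounit = idm ounit
}.

Definition is_map {Ob Hom} {S : SMCData Ob Hom} {B : CBData Ob Hom}
  {X Y : Ob} (f : Hom X Y) : Prop :=
  f >> copy Y = copy X >> f ** f /\ f >> disc Y = disc X.

Class BoolData (Ob : Type) (Hom : Ob -> Ob -> Type) := {
  bmeet : forall {X Y : Ob}, Hom X Y -> Hom X Y -> Hom X Y;
  bjoin : forall {X Y : Ob}, Hom X Y -> Hom X Y -> Hom X Y;
  bneg : forall {X Y : Ob}, Hom X Y -> Hom X Y;
  btop : forall X Y : Ob, Hom X Y;
  bbot : forall X Y : Ob, Hom X Y
}.

Class PeirceLaws (Ob : Type) (Hom : Ob -> Ob -> Type)
  {S : SMCData Ob Hom} {B : CBData Ob Hom} {D : BoolData Ob Hom} : Prop := {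
  pb_cb : CBLaws Ob Hom;
  meet_lb1 : forall X Y (f g : Hom X Y), bmeet f g ⊑ f;
  meet_lb2 : forall X Y (f g : Hom X Y), bmeet f g ⊑ g;
  meet_glb : forall X Y (f g h : Hom X Y), h ⊑ f -> h ⊑ g -> h ⊑ bmeet f g;
  join_ub1 : forall X Y (f g : Hom X Y), f ⊑ bjoin f g;
  join_ub2 : forall X Y (f g : Hom X Y), g ⊑ bjoin f g;
  join_lub : forall X Y (f g h : Hom X Y), f ⊑ h -> g ⊑ h -> bjoin f g ⊑ h;
  top_max : forall X Y (f : Hom X Y), f ⊑ btop X Y;
  bot_min : forall X Y (f : Hom X Y), bbot X Y ⊑ f;
  meet_join_distr : forall X Y (f g h : Hom X Y),
      bmeet f (bjoin g h) = bjoin (bmeet f g) (bmeet f h);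
  neg_meet : forall X Y (f : Hom X Y), bmeet f (bneg f) = bbot X Y;
  neg_join : forall X Y (f : Hom X Y), bjoin f (bneg f) = btop X Y;
  map_neg : forall X Y Z (f : Hom X Y) (c : Hom Y Z),
      is_map f -> f >> bneg c = bneg (f >> c)
}.

Definition dcomp {Ob Hom} {S : SMCData Ob Hom} {D : BoolData Ob Hom}
  {X Y Z : Ob} (a : Hom X Y) (b : Hom Y Z) : Hom X Z :=
  bneg (bneg a >> bneg b).

Notation "a >>* b" := (dcomp a b) (at level 40, left associativity).

(* Main.v *)
Require Import Defs.
From Stdlib Require Import Setoid.

Section S.
Context {Ob : Type} {Hom : Ob -> Ob -> Type} {S : SMCData Ob Hom}
  {B : CBData Ob Hom} {D : BoolData Ob Hom} {P : PeirceLaws Ob Hom}.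
Local Instance CBi : CBLaws Ob Hom := pb_cb.
Local Instance SLi : SMCLaws Ob Hom := cb_smc.

Arguments comp_assoc {_ _ _ _ X Y Z W}.
Arguments comp_idl {_ _ _ _ X Y}.
Arguments comp_idr {_ _ _ _ X Y}.
Arguments htens_comp {_ _ _ _ X Y Z X' Y' Z'}.
Arguments htens_id {_ _ _ _}.
Arguments assoc_nat {_ _ _ _ X Y Z X' Y' Z'}.
Arguments lunit_nat {_ _ _ _ X Y}.
Arguments runit_nat {_ _ _ _ X Y}.
Arguments sym_nat {_ _ _ _ X Y X' Y'}.
Arguments lax_copy {_ _ _ _ _ X Y}.
Arguments lax_disc {_ _ _ _ _ X Y}.

Lemma c2 {A X Y C} (f : Hom A X) (g : Hom X Y) (r : Hom A Y) (H : f >> g = r)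
  (k : Hom Y C) : f >> (g >> k) = r >> k.
Proof. rewrite <- comp_assoc, H; reflexivity. Qed.

Lemma fuse {X Y Z X' Y' Z'} (f : Hom X Y) (g : Hom Y Z) (f' : Hom X' Y') (g' : Hom Y' Z') :
  f ** f' >> g ** g' = (f >> g) ** (f' >> g').
Proof. symmetry; apply htens_comp. Qed.
Lemma fusek {X Y Z X' Y' Z' C} (f : Hom X Y) (g : Hom Y Z) (f' : Hom X' Y') (g' : Hom Y' Z') (k : Hom _ C):
  f ** f' >> (g ** g' >> k) = (f >> g) ** (f' >> g') >> k.
Proof. rewrite <- comp_assoc, fuse; reflexivity. Qed.

Ltac norm := repeat rewrite comp_assoc; repeat rewrite comp_idl; repeat rewrite comp_idr.
Ltac fuse := repeat (rewrite fusek || rewrite fuse); norm.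


Ltac norm2 := repeat rewrite comp_assoc; repeat rewrite htens_id; repeat rewrite comp_idl; repeat rewrite comp_idr.

Lemma mono_l {X Y Z} (f : Hom X Y) (g g' : Hom Y Z) : g ⊑ g' -> f >> g ⊑ f >> g'.
Proof. intro; apply comp_mono; [apply hle_refl|assumption]. Qed.
Lemma mono_r {X Y Z} (f f' : Hom X Y) (g : Hom Y Z) : f ⊑ f' -> f >> g ⊑ f' >> g.
Proof. intro; apply comp_mono; [assumption|apply hle_refl]. Qed.
Lemma tmono_l {X Y X' Y'} (f : Hom X Y) (g g' : Hom X' Y') : g ⊑ g' -> f ** g ⊑ f ** g'.
Proof. intro; apply htens_mono; [apply hle_refl|assumption]. Qed.
Lemma tmono_r {X Y X' Y'} (f f' : Hom X Y) (g : Hom X' Y') : f ⊑ f' -> f ** g ⊑ f' ** g.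
Proof. intro; apply htens_mono; [assumption|apply hle_refl]. Qed.
Lemma eq_le {X Y} (f g : Hom X Y) : f = g -> f ⊑ g.
Proof. intros ->; apply hle_refl. Qed.

Lemma split_tl {X Y X' Y'} (f : Hom X Y) (g : Hom X' Y') : f ** g = f ** idm _ >> idm _ ** g.
Proof. rewrite fuse; norm; reflexivity. Qed.
Lemma split_tr {X Y X' Y'} (f : Hom X Y) (g : Hom X' Y') : f ** g = idm _ ** g >> f ** idm _.
Proof. rewrite fuse; norm; reflexivity. Qed.

Lemma copy_disc_r X : copy X >> idm X ** disc X = runitI X.
Proof.
  rewrite <- (comp_idr (copy X >> _)), <- (runit_iso1 X), <- comp_assoc, copy_counitr, comp_idl; reflexivity.
Qed.
Lemma copy_disc_l X : copy X >> disc X ** idm X = lunitI X.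
Proof.
  rewrite <- (comp_idr (copy X >> _)), <- (lunit_iso1 X), <- comp_assoc, copy_counitl, comp_idl; reflexivity.
Qed.

Lemma cocopy_proj_r X : cocopy X ⊑ idm X ** disc X >> runit X.
Proof.
  replace (cocopy X) with (cocopy X >> (copy X >> (idm X ** disc X >> runit X))) at 1
    by (rewrite <- (comp_assoc (copy X)), copy_counitr, comp_idr; reflexivity).
  rewrite <- comp_assoc. eapply hle_trans; [apply mono_r, adj_copy_counit|].
  rewrite comp_idl; apply hle_refl.
Qed.
Lemma cocopy_proj_l X : cocopy X ⊑ disc X ** idm X >> lunit X.
Proof.
  replace (cocopy X) with (cocopy X >> (copy X >> (disc X ** idm X >> lunit X))) at 1
    by (rewrite <- (comp_assoc (copy X)), copy_counitl, comp_idr; reflexivity).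
  rewrite <- comp_assoc. eapply hle_trans; [apply mono_r, adj_copy_counit|].
  rewrite comp_idl; apply hle_refl.
Qed.

Lemma lax1 {X Y} (a : Hom X Y) : a ⊑ copy X >> (a ** a >> cocopy Y).
Proof.
  eapply hle_trans. { rewrite <- (comp_idr a) at 1. apply mono_l, adj_copy_unit. }
  rewrite <- comp_assoc. eapply hle_trans. { apply mono_r, lax_copy. } norm; apply hle_refl.
Qed.
Lemma lax2 {X Y} (a : Hom X Y) : cocopy X >> a ⊑ a ** a >> cocopy Y.
Proof.
  eapply hle_trans. { apply mono_l, lax1. }
  rewrite <- comp_assoc. eapply hle_trans; [apply mono_r, adj_copy_counit|].
  rewrite comp_idl; apply hle_refl.
Qed.

Definition cm {X Y} (a b : Hom X Y) : Hom X Y := copy X >> (a ** b >> cocopy Y).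

Lemma cm_lb1 {X Y} (a b : Hom X Y) : cm a b ⊑ a.
Proof.
  unfold cm. eapply hle_trans. { apply mono_l, mono_l, cocopy_proj_r. }
  rewrite (c2 _ _ _ (fuse _ _ _ _)). norm.
  eapply hle_trans. { apply mono_l, mono_r, tmono_l, lax_disc. }
  rewrite (split_tr a). norm. rewrite runit_nat.
  rewrite <- comp_assoc, <- comp_assoc, copy_counitr; norm; apply hle_refl.
Qed.
Lemma cm_lb2 {X Y} (a b : Hom X Y) : cm a b ⊑ b.
Proof.
  unfold cm. eapply hle_trans. { apply mono_l, mono_l, cocopy_proj_l. }
  rewrite (c2 _ _ _ (fuse _ _ _ _)). norm.
  eapply hle_trans. { apply mono_l, mono_r, tmono_r, lax_disc. }
  rewrite (split_tl _ b). norm. rewrite lunit_nat.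
  rewrite <- comp_assoc, <- comp_assoc, copy_counitl; norm; apply hle_refl.
Qed.
Lemma cm_glb {X Y} (a b c : Hom X Y) : c ⊑ a -> c ⊑ b -> c ⊑ cm a b.
Proof.
  intros Ha Hb. eapply hle_trans; [apply lax1|]. unfold cm.
  apply mono_l, mono_r, htens_mono; assumption.
Qed.
Lemma meet_cm {X Y} (a b : Hom X Y) : bmeet a b = cm a b.
Proof.
  apply hle_antisym.
  - apply cm_glb; [apply meet_lb1|apply meet_lb2].
  - apply meet_glb; [apply cm_lb1|apply cm_lb2].
Qed.

Lemma cancel_iso {X Y Z} (u : Hom X Y) (v : Hom Y X) (x y : Hom Y Z) :
  v >> u = idm Y -> u >> x = u >> y -> x = y.
Proof.
  intros Hvu Hxy. rewrite <- (comp_idl x), <- (comp_idl y), <- Hvu, !comp_assoc, Hxy; reflexivity.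
Qed.
Lemma cancel_iso_r {X Y Z} (u : Hom Y Z) (v : Hom Z Y) (x y : Hom X Y) :
  u >> v = idm Y -> x >> u = y >> u -> x = y.
Proof.
  intros Huv Hxy. rewrite <- (comp_idr x), <- (comp_idr y), <- Huv, <- !comp_assoc, Hxy; reflexivity.
Qed.

Lemma assocI_nat {X Y Z X' Y' Z'} (f : Hom X X') (g : Hom Y Y') (h : Hom Z Z') :
  assocI X Y Z >> f ** g ** h = f ** (g ** h) >> assocI X' Y' Z'.
Proof.
  apply (cancel_iso_r (assoc X' Y' Z') (assocI X' Y' Z')); [apply assoc_iso1|].
  rewrite !comp_assoc, assoc_iso2, comp_idr, assoc_nat, <- comp_assoc, assoc_iso2, comp_idl.
  reflexivity.
Qed.
Lemma lunitI_nat {X Y} (f : Hom X Y) : lunitI X >> idm ounit ** f = f >> lunitI Y.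
Proof.
  apply (cancel_iso_r (lunit Y) (lunitI Y)); [apply lunit_iso1|].
  rewrite !comp_assoc, lunit_iso2, comp_idr, lunit_nat, <- comp_assoc, lunit_iso2, comp_idl.
  reflexivity.
Qed.
Lemma runitI_nat {X Y} (f : Hom X Y) : runitI X >> f ** idm ounit = f >> runitI Y.
Proof.
  apply (cancel_iso_r (runit Y) (runitI Y)); [apply runit_iso1|].
  rewrite !comp_assoc, runit_iso2, comp_idr, runit_nat, <- comp_assoc, runit_iso2, comp_idl.
  reflexivity.
Qed.

Lemma lfaith {Z W} (f g : Hom Z W) : idm ounit ** f = idm ounit ** g -> f = g.
Proof.
  intro H.
  assert (E : forall h : Hom Z W, h = lunitI Z >> (idm ounit ** h >> lunit W)).
  { intro h. rewrite lunit_nat, <- comp_assoc, lunit_iso2, comp_idl; reflexivity. }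
  rewrite (E f), (E g), H; reflexivity.
Qed.

Lemma tens_iso_l {X Y Z} (u : Hom Y Z) (v : Hom Z Y) :
  u >> v = idm Y -> idm X ** u >> idm X ** v = idm (X ⊗ Y).
Proof. intro H; rewrite fuse, H, comp_idl, htens_id; reflexivity. Qed.
Lemma tens_iso_r {X Y Z} (u : Hom Y Z) (v : Hom Z Y) :
  u >> v = idm Y -> u ** idm X >> v ** idm X = idm (Y ⊗ X).
Proof. intro H; rewrite fuse, H, comp_idl, htens_id; reflexivity. Qed.

Lemma P1 W X Y Z :
  assocI (W ⊗ X) Y Z >> (assoc W X Y ** idm Z >> assoc W (X ⊗ Y) Z)
  = assoc W X (Y ⊗ Z) >> idm W ** assocI X Y Z.
Proof.
  apply (cancel_iso_r (idm W ** assoc X Y Z) (idm W ** assocI X Y Z)); [apply tens_iso_l, assoc_iso1|].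
  rewrite !comp_assoc, (tens_iso_l _ _ (assoc_iso2 X Y Z)), comp_idr.
  apply (cancel_iso (assoc (W ⊗ X) Y Z) (assocI (W ⊗ X) Y Z)); [apply assoc_iso2|].
  rewrite <- comp_assoc, assoc_iso1, comp_idl. rewrite pentagon. norm. reflexivity.
Qed.

Lemma tcl {X Y Z W} (x : Hom Y Z) (y : Hom Z W) : idm X ** (x >> y) = idm X ** x >> idm X ** y.
Proof. rewrite fuse, comp_idl; reflexivity. Qed.
Lemma tcr {X Y Z W} (x : Hom Y Z) (y : Hom Z W) : (x >> y) ** idm X = x ** idm X >> y ** idm X.
Proof. rewrite fuse, comp_idl; reflexivity. Qed.

Lemma K1 A Bo : assoc ounit A Bo >> lunit (A ⊗ Bo) = lunit A ** idm Bo.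
Proof.
  apply lfaith.
  apply (cancel_iso (assoc ounit (ounit ⊗ A) Bo) (assocI ounit (ounit ⊗ A) Bo)); [apply assoc_iso2|].
  apply (cancel_iso (assoc ounit ounit A ** idm Bo) (assocI ounit ounit A ** idm Bo)); [apply tens_iso_r, assoc_iso2|].
  transitivity (assoc (ounit ⊗ ounit) A Bo >> runit ounit ** idm (A ⊗ Bo)).
  - rewrite tcl. rewrite <- !comp_assoc, <- pentagon. rewrite !comp_assoc, triangle. reflexivity.
  - rewrite <- assoc_nat. rewrite <- comp_assoc, <- tcr, triangle.
    rewrite <- htens_id, <- assoc_nat. reflexivity.
Qed.



Lemma c3 {A X Y Z C} (f : Hom A X) (g : Hom X Y) (h : Hom Y Z) (r : Hom A Z)
  (H : f >> (g >> h) = r) (k : Hom Z C) : f >> (g >> (h >> k)) = r >> k.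
Proof. rewrite <- H; norm; reflexivity. Qed.

Lemma Fr1 X : copy X = runitI X >> (idm X ** codisc X >> (idm X ** copy X >> (assocI X X X >> cocopy X ** idm X))).
Proof.
  pose proof (frob_r X) as H. rewrite comp_assoc in H. rewrite H.
  rewrite <- !comp_assoc, cocopy_unitr, comp_idl. reflexivity.
Qed.
Lemma Cf1 Y : cocopy Y = copy Y ** idm Y >> (assoc Y Y Y >> (idm Y ** (cocopy Y >> disc Y) >> runit Y)).
Proof.
  pose proof (frob_l Y) as H. rewrite comp_assoc in H. rewrite tcl. norm.
  rewrite <- (comp_assoc (assoc Y Y Y)), <- (comp_assoc (copy Y ** idm Y)), H.
  norm. rewrite <- (comp_assoc (copy Y)), copy_counitr, comp_idr. reflexivity.
Qed.
Lemma Cf2 Y : cocopy Y = idm Y ** copy Y >> (assocI Y Y Y >> ((cocopy Y >> disc Y) ** idm Y >> lunit Y)).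
Proof.
  pose proof (frob_r Y) as H. rewrite comp_assoc in H. rewrite tcr. norm.
  rewrite <- (comp_assoc (assocI Y Y Y)), <- (comp_assoc (idm Y ** copy Y)), H.
  norm. rewrite <- (comp_assoc (copy Y)), copy_counitl, comp_idr. reflexivity.
Qed.

Definition tt {X Y} (a : Hom X Y) : Hom Y (Y ⊗ X) :=
  disc Y >> (codisc X >> (copy X >> a ** idm X)).
Definition GG {X Y} (a : Hom X Y) : Hom Y (Y ⊗ X) :=
  copy Y >> (idm Y ** tt a >> (assocI Y Y X >> cocopy Y ** idm X)).
Definition conv {X Y} (a : Hom X Y) : Hom Y X :=
  copy Y >> (idm Y ** tt a >> (assocI Y Y X >> ((cocopy Y >> disc Y) ** idm X >> lunit X))).

Lemma coassoc_k {X C} (k : Hom (X ⊗ (X ⊗ X)) C) :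
  copy X >> (idm X ** copy X >> k) = copy X >> (copy X ** idm X >> (assoc X X X >> k)).
Proof. rewrite <- !comp_assoc, copy_coassoc; reflexivity. Qed.

Lemma EqY {X Y} (a : Hom X Y) : copy Y >> idm Y ** conv a = GG a.
Proof.
  set (t := tt a).
  transitivity (copy Y >> (copy Y ** t >> (assoc Y Y (Y ⊗ X) >> (idm Y ** assocI Y Y X >>
     (idm Y ** ((cocopy Y >> disc Y) ** idm X) >> idm Y ** lunit X))))).
  - unfold conv. fold t. rewrite !tcl. 
    rewrite coassoc_k.
    rewrite (c2 _ _ _ (eq_sym (assoc_nat (idm Y) (idm Y) t))). norm. rewrite (fusek (copy Y) _ (idm Y) t), htens_id. norm. reflexivity.
  - unfold GG. fold t.
    assert (Hc : cocopy Y ** idm X = (copy Y ** idm Y) ** idm X >> (assoc Y Y Y ** idm X >>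
       ((idm Y ** (cocopy Y >> disc Y)) ** idm X >> runit Y ** idm X)))
      by (rewrite <- !tcr, <- Cf1; reflexivity).
    rewrite Hc. norm.
    rewrite (c2 _ _ _ (assocI_nat (copy Y) (idm Y) (idm X))). norm.
    rewrite (fusek (idm Y) (copy Y) t), htens_id. norm.
    rewrite <- triangle. rewrite (c2 _ _ _ (assoc_nat _ _ _)).
    norm. rewrite (c2 _ _ _ (eq_sym (P1 Y Y Y X))). norm. reflexivity.
Qed.

Lemma E_lem {X Y} (a : Hom X Y) : copy X >> a ** idm X ⊑ a >> GG a.
Proof.
  apply hle_trans with (runitI X >> (idm X ** codisc X >> (idm X ** copy X >>
      (a ** (a ** idm X) >> (assocI Y Y X >> cocopy Y ** idm X))))).
  - rewrite (Fr1 X) at 1. norm.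
    apply mono_l, mono_l, mono_l.
    rewrite (c2 _ _ _ (eq_sym (assocI_nat a a (idm X)))). norm.
    apply mono_l. rewrite !fuse. norm. apply tmono_r, lax2.
  - apply eq_le. unfold GG, tt. rewrite tcl. norm. rewrite (c2 _ _ _ (copy_disc_r Y)).
    rewrite (c2 _ _ _ (eq_sym (runitI_nat a))). norm. fuse. reflexivity.
Qed.

Lemma P2 W X Y Z :
  idm W ** assoc X Y Z >> assocI W X (Y ⊗ Z)
  = assocI W (X ⊗ Y) Z >> (assocI W X Y ** idm Z >> assoc (W ⊗ X) Y Z).
Proof.
  apply (cancel_iso_r (assoc W X (Y ⊗ Z)) (assocI W X (Y ⊗ Z))); [apply assoc_iso1|].
  rewrite !comp_assoc, assoc_iso2, comp_idr. rewrite pentagon. norm.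
  rewrite (c2 _ _ _ (tens_iso_r _ _ (assoc_iso2 W X Y))). norm.
  rewrite <- comp_assoc, assoc_iso2, comp_idl. reflexivity.
Qed.

Lemma LemA X Y : assocI Y Y X >> cocopy Y ** idm X
  = idm Y ** (copy Y ** idm X >> assoc Y Y X) >> (assocI Y Y (Y ⊗ X) >>
      ((cocopy Y >> disc Y) ** idm (Y ⊗ X) >> lunit (Y ⊗ X))).
Proof.
  rewrite tcl. norm. rewrite (c2 _ _ _ (P2 Y Y Y X)). norm.
  rewrite (c2 _ _ _ (eq_sym (assocI_nat (idm Y) (copy Y) (idm X)))). norm.
  rewrite <- (htens_id Y X). rewrite (c2 _ _ _ (eq_sym (assoc_nat (cocopy Y >> disc Y) (idm Y) (idm X)))).
  norm. rewrite K1. rewrite (Cf2 Y) at 1. rewrite !tcr. norm. reflexivity.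
Qed.

Lemma Bt {X Y} (a : Hom X Y) :
  tt a >> (copy Y ** idm X >> assoc Y Y X) ⊑ tt a >> idm Y ** (copy X >> a ** idm X).
Proof.
  unfold tt. norm. apply mono_l, mono_l.
  rewrite (fusek a (copy Y) (idm X) (idm X)). norm.
  apply hle_trans with (copy X >> ((copy X >> a ** a) ** idm X >> assoc Y Y X)).
  { apply mono_l, mono_r, tmono_r, lax_copy. }
  apply eq_le. rewrite tcr. norm. rewrite assoc_nat.
  rewrite <- coassoc_k. fuse. reflexivity.
Qed.

Lemma E2 {X Y} (a : Hom X Y) : copy Y >> idm Y ** conv a ⊑ conv a >> (copy X >> a ** idm X).
Proof.
  rewrite EqY. unfold GG. rewrite LemA. norm.
  rewrite (fusek (idm Y) (idm Y) (tt a)). norm.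
  apply hle_trans with (copy Y >> (idm Y ** (tt a >> idm Y ** (copy X >> a ** idm X)) >>
     (assocI Y Y (Y ⊗ X) >> ((cocopy Y >> disc Y) ** idm (Y ⊗ X) >> lunit (Y ⊗ X))))).
  { apply mono_l, mono_r, tmono_l. pose proof (Bt a) as H. norm. exact H. }
  apply eq_le. unfold conv. norm.
  rewrite <- (lunit_nat (copy X >> a ** idm X)).
  rewrite (fusek (cocopy Y >> disc Y) (idm ounit) (idm X)). norm.
  rewrite (tcl (tt a)). norm.
  rewrite (c2 _ _ _ (eq_sym (assocI_nat (idm Y) (idm Y) (copy X >> a ** idm X)))). norm.
  rewrite (fusek (idm Y ** idm Y)). rewrite htens_id. norm. reflexivity.
Qed.

Lemma cm_comm {X Y} (a b : Hom X Y) : cm a b = cm b a.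
Proof.
  unfold cm. rewrite <- (copy_cocomm X) at 1. norm.
  rewrite (c2 _ _ _ (eq_sym (sym_nat b a))). norm. rewrite cocopy_comm. reflexivity.
Qed.

Lemma M2 {X Y Z} (a : Hom X Y) (b : Hom Y Z) (c : Hom X Z) :
  cm (a >> b) c ⊑ a >> cm b (conv a >> c).
Proof.
  unfold cm.
  assert (H1 : a ** idm X >> b ** c = (a >> b) ** c) by (rewrite fuse, comp_idl; reflexivity).
  rewrite <- H1. norm.
  rewrite <- comp_assoc. eapply hle_trans; [apply mono_r, E_lem|].
  rewrite <- EqY. norm. apply mono_l, mono_l.
  rewrite (fusek (idm Y) b (conv a) c). norm. apply hle_refl.
Qed.

Lemma M1 {X Y Z} (p : Hom X Y) (s : Hom X Z) (q : Hom Y Z) :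
  cm (conv p >> s) q ⊑ conv p >> cm (p >> q) s.
Proof.
  rewrite cm_comm. unfold cm.
  assert (H1 : idm Y ** conv p >> q ** s = q ** (conv p >> s)) by (rewrite fuse, comp_idl; reflexivity).
  rewrite <- H1. norm.
  rewrite <- comp_assoc. eapply hle_trans; [apply mono_r, E2|]. norm.
  apply mono_l, mono_l. rewrite (fusek p q (idm X) s). norm. apply hle_refl.
Qed.


Lemma meet_comm {X Y} (f g : Hom X Y) : bmeet f g = bmeet g f.
Proof. apply hle_antisym; apply meet_glb; first [apply meet_lb2|apply meet_lb1]. Qed.
Lemma meet_top {X Y} (f : Hom X Y) : bmeet f (btop X Y) = f.
Proof. apply hle_antisym; [apply meet_lb1|apply meet_glb; [apply hle_refl|apply top_max]]. Qed.
Lemma meet_mono {X Y} (f f' g g' : Hom X Y) : f ⊑ f' -> g ⊑ g' -> bmeet f g ⊑ bmeet f' g'.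
Proof.
  intros; apply meet_glb; [eapply hle_trans; [apply meet_lb1|assumption]|eapply hle_trans; [apply meet_lb2|assumption]].
Qed.
Lemma le_neg {X Y} (x y : Hom X Y) : bmeet x y ⊑ bbot X Y -> x ⊑ bneg y.
Proof.
  intro H. rewrite <- (meet_top x), <- (neg_join _ _ y), meet_join_distr.
  apply join_lub.
  - eapply hle_trans; [exact H|apply bot_min].
  - apply meet_lb2.
Qed.
Lemma neg_neg {X Y} (x : Hom X Y) : bneg (bneg x) = x.
Proof.
  apply hle_antisym.
  - rewrite <- (meet_top (bneg (bneg x))), <- (neg_join _ _ x), meet_join_distr.
    apply join_lub; [apply meet_lb2|].
    rewrite meet_comm, neg_meet. apply bot_min.
  - apply le_neg. rewrite neg_meet. apply hle_refl.
Qed.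
Lemma neg_top X Y : bneg (btop X Y) = bbot X Y.
Proof. rewrite <- (neg_meet _ _ (btop X Y)), meet_comm, meet_top. reflexivity. Qed.

Lemma disc_map X : is_map (disc X).
Proof.
  split.
  - rewrite copy_unit. rewrite (split_tl (disc X)). rewrite <- comp_assoc, copy_disc_l.
    rewrite lunitI_nat. reflexivity.
  - rewrite disc_unit, comp_idr. reflexivity.
Qed.
Lemma disc_top X Z : disc X >> btop ounit Z = btop X Z.
Proof.
  apply hle_antisym; [apply top_max|].
  eapply hle_trans. { rewrite <- (comp_idl (btop X Z)) at 1. apply mono_r, adj_disc_unit. }
  norm. apply mono_l, top_max.
Qed.
Lemma disc_bot X Z : disc X >> bbot ounit Z = bbot X Z.
Proof.
  rewrite <- !neg_top, map_neg by apply disc_map. rewrite disc_top. reflexivity.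
Qed.
Lemma comp_bot {X Y Z} (f : Hom X Y) : f >> bbot Y Z ⊑ bbot X Z.
Proof.
  rewrite <- (disc_bot Y), <- (disc_bot X), <- comp_assoc. apply mono_r, lax_disc.
Qed.

Lemma part1 {X Y Z W} (c : Hom X Y) (d : Hom Y Z) (e : Hom Z W) :
  c >> (d >>* e) ⊑ (c >> d) >>* e.
Proof.
  unfold dcomp. set (a := bneg d >> bneg e). set (b := bneg (c >> d)).
  apply le_neg. rewrite meet_cm.
  eapply hle_trans; [apply M2|].
  eapply hle_trans; [|apply (comp_bot c)]. apply mono_l.
  assert (Hcb : conv c >> b ⊑ bneg d).
  { apply le_neg. rewrite meet_cm. eapply hle_trans; [apply M1|].
    rewrite <- meet_cm. unfold b. rewrite neg_meet. apply comp_bot. }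
  rewrite <- meet_cm. apply hle_trans with (bmeet (bneg a) a).
  - apply meet_mono; [apply hle_refl|]. rewrite <- comp_assoc. apply mono_r, Hcb.
  - rewrite meet_comm, neg_meet. apply hle_refl.
Qed.

Lemma part2 {X Y Z W} (c : Hom X Y) (d : Hom Y Z) (e : Hom Z W) :
  (c >>* d) >> e ⊑ c >>* (d >> e).
Proof.
  unfold dcomp. set (u := bneg c >> bneg d).
  apply le_neg. rewrite meet_comm, meet_cm.
  eapply hle_trans; [apply M2|].
  eapply hle_trans; [|apply (comp_bot (bneg c))]. apply mono_l.
  assert (H : conv (bneg c) >> bneg u ⊑ d).
  { rewrite <- (neg_neg d). apply le_neg. rewrite meet_cm. eapply hle_trans; [apply M1|].
    rewrite <- meet_cm. fold u. rewrite neg_meet. apply comp_bot. }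
  rewrite <- meet_cm. apply hle_trans with (bmeet (bneg (d >> e)) (d >> e)).
  - apply meet_mono; [apply hle_refl|]. rewrite <- comp_assoc. apply mono_r, H.
  - rewrite meet_comm, neg_meet. apply hle_refl.
Qed.

End S.

Theorem lemma65 (Ob : Type) (Hom : Ob -> Ob -> Type)
  (S : SMCData Ob Hom) (B : CBData Ob Hom) (D : BoolData Ob Hom)
  (P : PeirceLaws Ob Hom)
  (X Y Z W : Ob) (c : Hom X Y) (d : Hom Y Z) (e : Hom Z W) :
  c >> (d >>* e) ⊑ (c >> d) >>* e /\ (c >>* d) >> e ⊑ c >>* (d >> e).
Proof.
  split.
  - exact (@part1 Ob Hom S B D P X Y Z W c d e).
  - exact (@part2 Ob Hom S B D P X Y Z W c d e).
Qed.
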